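(* Let $0=X_0<\dots<X_K=1$ be a mesh of $K\ge1$ elements, each carrying $p+1$ Gauss–Lobatto nodes ($p\ge1$), with $N+1=Kp+1$ global nodes, global unknown vector $\mathbf{U}=(\bar u_0,\dots,\bar u_N)^T$ and restriction matrices $R_e$. Let $a\ge0$ be constant and let $\varepsilon_j(t)\ge0$, $j=0,\dots,N$, be continuous global nodal diffusion coefficients; set $\mathcal{E}^e=\mathrm{diag}(R_e(\varepsilon_0,\dots,\varepsilon_N)^T)$. Define the assembled matrices $$\mathcal{P}=\sum_e R_e^T\mathcal{P}^eR_e,\quad \mathcal{Q}_x=\sum_eR_e^T\mathcal{Q}_x^eR_e,\quad \mathcal{A}=\sum_eR_e^T(\sqrt{\mathcal{E}^e}\mathcal{D}_x^e)^T\mathcal{P}^e(\sqrt{\mathcal{E}^e}\mathcal{D}_x^e)R_e,$$ and let $\delta_0:=(\mathcal{D}_x^1R_1\mathbf{U})_0$ and $\delta_N:=(\mathcal{D}_x^KR_K\mathbf{U})_p$ (the discrete derivatives at $x=0$ and $x=1$ from the first and last element). Let $\mathbf{U}(t)$ be a $C^1$ solution of $$\mathcal{P}\frac{d\mathbf{U}}{dt}+a\mathcal{Q}_x\mathbf{U}=-\mathcal{A}\mathbf{U}-\varepsilon_0\delta_0E_0+\varepsilon_N\delta_NE_N+\sigma_0E_0\big[a\bar u_0-\varepsilon_0\delta_0-g_0\big]+\sigma_NE_N\big[-\varepsilon_N\delta_N-g_N\big],$$ where $E_0,E_N$ are the first and last standard unit vectors of $\mathbb{R}^{N+1}$. If $\sigma_0=-1$,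 $\sigma_N=1$ and $g_0=g_N=0$, then for all $t\ge0$ $$\mathbf{U}(t)^T\mathcal{P}\mathbf{U}(t)+2\int_0^t\sum_{e=1}^K\big(\sqrt{\mathcal{E}^e}\mathcal{D}_x^eR_e\mathbf{U}\big)^T\mathcal{P}^e\big(\sqrt{\mathcal{E}^e}\mathcal{D}_x^eR_e\mathbf{U}\big)\,ds\le\mathbf{U}(0)^T\mathcal{P}\mathbf{U}(0).$$ That is, the energy stability of the single-element scheme is retained after continuous Galerkin merging of elements.
   Context: For element $e=[X_{e-1},X_e]$ with Gauss–Lobatto nodes $x^e_0<\dots<x^e_p$ (endpoints included), positive weights $w^e_k$ and degree-$p$ Lagrange basis $\ell^e_j$: $\mathcal{P}^e=\mathrm{diag}(w^e_0,\dots,w^e_p)$, $(\mathcal{Q}_x^e)_{ij}=\int_{X_{e-1}}^{X_e}\ell^e_i(\ell^e_j)'dx$, $\mathcal{D}_x^e=(\mathcal{P}^e)^{-1}\mathcal{Q}_x^e$. Global nodes are numbered left to right, local node $j$ of element $e$ is global node $(e-1)p+j$, and $R_e\in\mathbb{R}^{(p+1)\times(N+1)}$ is the Boolean matrix selecting those global entries. $\sqrt{\cdot}$ of a nonnegative diagonal matrix is taken entrywise. *)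

(* Defs.v *)
From HB Require Import structures.
From mathcomp Require Import all_boot all_order all_algebra.
From mathcomp Require Import all_classical all_reals all_analysis.
Unset Printing Implicit Defensive.
Import Order.TTheory GRing.Theory Num.Theory.
Import numFieldNormedType.Exports.
Local Open Scope ring_scope.
Local Open Scope classical_set_scope.

Definition lagrange (R : realType) (n : nat) (x : 'I_n.+1 -> R) (j : 'I_n.+1)
  : {poly R} :=
  \prod_(m < n.+1 | m != j) (('X - (x m)%:P) * ((x j - x m)^-1)%:P).

Definition pint (R : realType) (a b : R) (q : {poly R}) : R :=
  Rintegral (@lebesgue_measure R) `[a, b] (fun y => q.[y]).

(* (x, w) is the (n+1)-point Gauss-Lobatto rule on [a,b]: increasing nodes
   including both endpoints, positive weights, and exactness for all
   polynomials of degree <= 2n-1 (size <= 2n). *)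
Definition gauss_lobatto (R : realType) (n : nat) (a b : R)
  (x w : 'I_n.+1 -> R) : Prop :=
  [/\ x ord0 = a, x ord_max = b,
      (forall i j : 'I_n.+1, (i < j)%N -> x i < x j),
      (forall k, 0 < w k) &
      forall q : {poly R}, (size q <= 2 * n)%N ->
        \sum_(k < n.+1) w k * q.[x k] = pint R a b q].

(* Elements are numbered e = 0..K-1 (paper's e+1); element e is [X e, X (e+1)],
   with nodes xn e and weights w e. *)
Definition Pe (R : realType) (p : nat) (w : nat -> 'I_p.+1 -> R) (e : nat)
  : 'M[R]_p.+1 := diag_mx (\row_k w e k).

Definition Qe (R : realType) (p : nat) (X : nat -> R) (xn : nat -> 'I_p.+1 -> R)
  (e : nat) : 'M[R]_p.+1 :=
  \matrix_(i, j) pint R (X e) (X e.+1)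
     (lagrange R p (xn e) i * (lagrange R p (xn e) j)^`()).

Definition De (R : realType) (p : nat) (X : nat -> R) (xn w : nat -> 'I_p.+1 -> R)
  (e : nat) : 'M[R]_p.+1 := invmx (Pe R p w e) *m Qe R p X xn e.

Definition Restr (R : realType) (K p : nat) (e : nat) : 'M[R]_(p.+1, (K * p).+1) :=
  \matrix_(j, g) (((g : nat) == e * p + j)%N)%:R.

Definition sqrtE (R : realType) (K p : nat) (e : nat) (epsv : 'cV[R]_((K * p).+1))
  : 'M[R]_p.+1 := diag_mx (\row_j Num.sqrt ((Restr R K p e *m epsv) j 0)).

Definition Pg (R : realType) (K p : nat) (w : nat -> 'I_p.+1 -> R)
  : 'M[R]_((K * p).+1) :=
  \sum_(e < K) (Restr R K p e)^T *m Pe R p w e *m Restr R K p e.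

Definition Qg (R : realType) (K p : nat) (X : nat -> R) (xn : nat -> 'I_p.+1 -> R)
  : 'M[R]_((K * p).+1) :=
  \sum_(e < K) (Restr R K p e)^T *m Qe R p X xn e *m Restr R K p e.

Definition Ag (R : realType) (K p : nat) (X : nat -> R) (xn w : nat -> 'I_p.+1 -> R)
  (epsv : 'cV[R]_((K * p).+1)) : 'M[R]_((K * p).+1) :=
  \sum_(e < K) (Restr R K p e)^T *m (sqrtE R K p e epsv *m De R p X xn w e)^T
       *m Pe R p w e *m (sqrtE R K p e epsv *m De R p X xn w e) *m Restr R K p e.

Definition elem_diss (R : realType) (K p : nat) (X : nat -> R)
  (xn w : nat -> 'I_p.+1 -> R) (epsv U : 'cV[R]_((K * p).+1)) (e : nat) : R :=
  let v := sqrtE R K p e epsv *m De R p X xn w e *m Restr R K p e *m U in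
  (v^T *m Pe R p w e *m v) 0 0.

Definition E0 (R : realType) (N : nat) : 'cV[R]_N.+1 := \col_i ((i : nat) == 0%N)%:R.
Definition EN (R : realType) (N : nat) : 'cV[R]_N.+1 := \col_i ((i : nat) == N)%:R.

Definition colv (R : realType) (n : nat) (u : 'I_n -> R -> R) (t : R) : 'cV[R]_n :=
  \col_i u i t.
Definition dcolv (R : realType) (n : nat) (u : 'I_n -> R -> R) (t : R) : 'cV[R]_n :=
  \col_i (u i)^`() t.

(* Main.v *)
Require Import Defs.
From HB Require Import structures.
From mathcomp Require Import all_boot all_order all_algebra.
From mathcomp Require Import all_classical all_reals all_analysis.
From mathcomp Require Import ring lra zify.
From Stdlib Require Import Lia.
Import Order.TTheory GRing.Theory Num.Theory.
Import numFieldNormedType.Exports.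
Local Open Scope ring_scope.
Local Open Scope classical_set_scope.

Set Implicit Arguments. Unset Strict Implicit.
Section Poly.
Variable R : realType.

Lemma size_lagrange (n : nat) (x : 'I_n.+1 -> R) (j : 'I_n.+1) : (size (Defs.lagrange R n x j) <= n.+1)%N.
Proof.
rewrite /Defs.lagrange.
apply: leq_trans (size_poly_prod_leq _ _) _.
have h : (\sum_(m | m != j) size ((('X - (x m)%:P) * ((x j - x m)^-1)%:P)%R) <= \sum_(m | m != j) 2)%N.
  apply: leq_sum => m _; apply: leq_trans (size_polyMleq _ _) _.
  by rewrite size_XsubC; have := size_polyC_leq1 ((x j - x m)^-1); case: (size _) => [|[|]].
rewrite sum_nat_const in h.
have ar : forall S c m : nat, (S <= c * 2 -> c = m -> S.+1 - c <= m.+1)%N by move=> *; lia.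
apply: (ar _ _ _ h).
by rewrite cardC1 card_ord.
Qed.

Lemma size_derivL (q : {poly R}) : (size (deriv q) <= (size q).-1)%N.
Proof.
have [->|nz] := eqVneq q 0; first by rewrite deriv0 size_poly0.
by have := lt_size_deriv nz; case: (size q).
Qed.

Lemma lagrange_node n (x : 'I_n.+1 -> R) (inj : injective x) i k :
  (Defs.lagrange R n x i).[x k] = (i == k)%:R.
Proof.
rewrite /Defs.lagrange horner_prod.
have [<-|ik] := eqVneq i k.
  rewrite big1 // => m mi; rewrite hornerM hornerC !hornerE divff //.
  by rewrite subr_eq0; apply: contra mi => /eqP/inj ->.
rewrite (bigD1 k) 1?eq_sym //= hornerM !hornerE subrr mul0r mul0r //.
Qed.

Lemma pint_deriv (a b : R) (q : {poly R}) : a < b -> pint R a b q^`() = q.[b] - q.[a].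
Proof.
move=> ab; rewrite /pint /Rintegral (continuous_FTC2 (F := horner q)) //=.
- apply: continuous_subspaceT => y. exact: continuous_horner.
- split.
  + by move=> y _; exact: derivable_horner.
  + apply: cvg_at_right_filter; exact: continuous_horner.
  + apply: cvg_at_left_filter; exact: continuous_horner.
- by move=> y _; rewrite -derivE.
Qed.

Lemma gl_inj n a b (x w : 'I_n.+1 -> R) : gauss_lobatto R n a b x w -> injective x.
Proof.
case=> _ _ mono _ _ i j eqx; apply/eqP; apply: contraT => ne.
case: (ltngtP i j) => [lt|lt|eqij].
- by have := mono _ _ lt; rewrite eqx ltxx.
- by have := mono _ _ lt; rewrite eqx ltxx.
- by move: ne; rewrite (val_inj eqij) eqxx.
Qed.

Lemma Q_sym n a b (x w : 'I_n.+1 -> R) (i j : 'I_n.+1) :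
  gauss_lobatto R n a b x w -> a < b ->
  pint R a b (Defs.lagrange R n x i * (Defs.lagrange R n x j)^`())
  + pint R a b (Defs.lagrange R n x j * (Defs.lagrange R n x i)^`())
  = ((i == ord_max) && (j == ord_max))%:R - ((i == ord0) && (j == ord0))%:R.
Proof.
move=> gl ab; have inj := gl_inj gl.
case: gl => xa xb _ _ ex.
set li := Defs.lagrange R n x i; set lj := Defs.lagrange R n x j.
have si : (size li <= n.+1)%N := size_lagrange x i. have sj : (size lj <= n.+1)%N := size_lagrange x j.
have sdi := size_derivL li; have sdj := size_derivL lj.
rewrite -!ex; first last.
- apply: leq_trans (size_polyMleq _ _) _; rewrite -/li -/lj. rewrite -!subn1 in sdi sdj *; lia.
- apply: leq_trans (size_polyMleq _ _) _; rewrite -/li -/lj -!subn1 in sdi sdj *; lia.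
rewrite -big_split /=.
have -> : \sum_(k < n.+1) (w k * (li * lj^`()).[x k] + w k * (lj * li^`()).[x k])
   = \sum_(k < n.+1) w k * (li * lj)^`().[x k].
  by apply: eq_bigr => k _; rewrite derivM hornerD !hornerM; ring.
rewrite ex; last first.
  have := size_derivL (li * lj); have := size_polyMleq li lj; lia.
rewrite pint_deriv // -xa -xb !hornerM /li /lj !lagrange_node //.
by rewrite -!natrM !mulnb.
Qed.
End Poly.
Section Alg.
Variable R : realType.

Lemma qform n (v : 'cV[R]_n) (M : 'M[R]_n) :
  (v^T *m M *m v) 0 0 = \sum_i \sum_j v i 0 * M i j * v j 0.
Proof.
rewrite mxE; under eq_bigr do rewrite mxE big_distrl /=.
rewrite exchange_big /=; apply: eq_bigr => i _; apply: eq_bigr => j _.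
by rewrite !mxE.
Qed.

Lemma sum_pick n (F : 'I_n -> R) m : \sum_j F j * (j == m)%:R = F m.
Proof.
rewrite (bigD1 m) //= eqxx mulr1 big1 ?addr0 // => j /negbTE ->; by rewrite mulr0.
Qed.

Lemma qform_tr m n (U : 'cV[R]_n) (Rm : 'M[R]_(m, n)) (M : 'M[R]_m) :
  (U^T *m (Rm^T *m M *m Rm) *m U) = (Rm *m U)^T *m M *m (Rm *m U).
Proof. by rewrite trmx_mul !mulmxA. Qed.

Lemma qform_sum n K (U : 'cV[R]_n) (F : 'I_K -> 'M[R]_n) :
  (U^T *m (\sum_(e < K) F e) *m U) 0 0 = \sum_(e < K) (U^T *m F e *m U) 0 0.
Proof. by rewrite mulmx_sumr mulmx_suml summxE. Qed.

Lemma vE0 N (U : 'cV[R]_N.+1) : (U^T *m E0 R N) 0 0 = U ord0 0.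
Proof.
rewrite mxE -(sum_pick (fun i => U i 0) ord0); apply: eq_bigr => i _.
by rewrite !mxE.
Qed.

Lemma vEN N (U : 'cV[R]_N.+1) : (U^T *m EN R N) 0 0 = U ord_max 0.
Proof.
rewrite mxE -(sum_pick (fun i => U i 0) ord_max); apply: eq_bigr => i _.
by rewrite !mxE.
Qed.

Lemma Qe_form (p : nat) (X : nat -> R) (xn w : nat -> 'I_p.+1 -> R) e (v : 'cV[R]_p.+1) :
  gauss_lobatto R p (X e) (X e.+1) (xn e) (w e) -> X e < X e.+1 ->
  (v^T *m Qe R p X xn e *m v) 0 0 = (v ord_max 0 ^+ 2 - v ord0 0 ^+ 2) / 2.
Proof.
move=> gl lt.
have h2 : 2 * (v^T *m Qe R p X xn e *m v) 0 0
   = \sum_i \sum_j v i 0 * v j 0 * (((i == ord_max) && (j == ord_max))%:R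
        - ((i == ord0) && (j == ord0))%:R).
  rewrite mulr2n mulrDl mul1r {1}qform qform.
  rewrite [X in _ + X = _]exchange_big -big_split /=.
  apply: eq_bigr => i _; rewrite -big_split /=; apply: eq_bigr => j _.
  rewrite -(Q_sym _ _ gl lt) !mxE; ring.
have e2 : \sum_i \sum_j v i 0 * v j 0 * (((i == ord_max) && (j == ord_max))%:R
        - ((i == ord0) && (j == ord0))%:R) = v ord_max 0 ^+ 2 - v ord0 0 ^+ 2.
  under eq_bigr do under eq_bigr do rewrite mulrBr -!mulnb !natrM.
  under eq_bigr do rewrite sumrB.
  rewrite sumrB.
  under eq_bigr do under eq_bigr do rewrite mulrA.
  under [X in _ - X]eq_bigr do under eq_bigr do rewrite mulrA.
  under eq_bigr do rewrite sum_pick.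
  under [X in _ - X]eq_bigr do rewrite sum_pick.
  rewrite (sum_pick (fun i => v i 0 * v ord_max 0)) (sum_pick (fun i => v i 0 * v ord0 0)).
  by rewrite !expr2.
rewrite e2 in h2; rewrite -h2 mulrC mulKf // pnatr_eq0.
Qed.

Lemma RU_entry K p e (U : 'cV[R]_((K * p).+1)) (j : 'I_p.+1) : (e < K)%N ->
  (Restr R K p e *m U) j 0 = U (inord (e * p + j)) 0.
Proof.
move=> eK.
have hk : (e * p + j < (K * p).+1)%N.
  have := ltn_ord j; move: eK; clear; move=> eK jp; nia.
rewrite mxE -(sum_pick (fun g => U g 0) (inord (e * p+j))); apply: eq_bigr => g _.
rewrite !mxE mulrC; congr (_ * _%:R).
by rewrite -(inj_eq val_inj) /= inordK.
Qed.

Lemma Qg_form K p (X : nat -> R) (xn w : nat -> 'I_p.+1 -> R) (U : 'cV[R]_((K * p).+1)) :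
  (forall e, (e < K)%N -> X e < X e.+1) ->
  (forall e, (e < K)%N -> gauss_lobatto R p (X e) (X e.+1) (xn e) (w e)) ->
  (U^T *m Qg R K p X xn *m U) 0 0 = (U ord_max 0 ^+ 2 - U ord0 0 ^+ 2) / 2.
Proof.
move=> hX hgl; rewrite /Qg qform_sum.
pose f n := U (inord (n * p)) 0 ^+ 2.
transitivity (\sum_(e < K) (f e.+1 - f e) / 2).
  apply: eq_bigr => e _.
  rewrite qform_tr (Qe_form _ (hgl _ (ltn_ord e)) (hX _ (ltn_ord e))).
  rewrite !RU_entry // /f /= addn0 mulSn addnC //.
rewrite -mulr_suml -(big_mkord xpredT (fun e => f e.+1 - f e)) telescope_sumr //.
rewrite /f mul0n; congr ((U _ 0 ^+ 2 - U _ 0 ^+ 2) / 2); apply: val_inj; rewrite /= inordK //.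
Qed.

Lemma entryD m n (A B : 'M[R]_(m, n)) i j : (A + B) i j = A i j + B i j.
Proof. by rewrite mxE. Qed.
Lemma entryN m n (A : 'M[R]_(m, n)) i j : (- A) i j = - A i j.
Proof. by rewrite mxE. Qed.
Lemma entryZ m n (a : R) (A : 'M[R]_(m, n)) i j : (a *: A) i j = a * A i j.
Proof. by rewrite mxE. Qed.

Lemma Ag_form K p (X : nat -> R) (xn w : nat -> 'I_p.+1 -> R) (epsv U : 'cV[R]_((K * p).+1)) :
  (U^T *m Ag R K p X xn w epsv *m U) 0 0 = \sum_(e < K) elem_diss R K p X xn w epsv U e.
Proof.
rewrite /Ag qform_sum; apply: eq_bigr => e _.
by rewrite /elem_diss !trmx_mul !mulmxA.
Qed.

Lemma energy_alg K p (X : nat -> R) (xn w : nat -> 'I_p.+1 -> R) (a : R)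
  (epsv U V : 'cV[R]_((K * p).+1)) (e0 d0 eN dN u0 : R) :
  (forall e, (e < K)%N -> X e < X e.+1) ->
  (forall e, (e < K)%N -> gauss_lobatto R p (X e) (X e.+1) (xn e) (w e)) ->
  u0 = U ord0 0 ->
  Pg R K p w *m V + a *: (Qg R K p X xn *m U) =
      - (Ag R K p X xn w epsv *m U) - (e0 * d0) *: E0 R (K * p)
      + (eN * dN) *: EN R (K * p)
      + (-1 * (a * u0 - e0 * d0 - 0)) *: E0 R (K * p)
      + (1 * (- (eN * dN) - 0)) *: EN R (K * p) ->
  2 * (U^T *m Pg R K p w *m V) 0 0 =
    - 2 * (\sum_(e < K) elem_diss R K p X xn w epsv U e)
    - a * (U ord0 0 ^+ 2 + U ord_max 0 ^+ 2).
Proof.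
move=> hX hgl -> H.
have := congr1 (fun M => (U^T *m M) 0 0) H => /=.
rewrite !mulmxDr !mulmxN -!scalemxAr !entryD !entryN !entryZ.
rewrite !mulmxA (Qg_form _ hX hgl) (Ag_form) !vE0 !vEN => h.
have -> : (U^T *m Pg R K p w *m V) 0 0 =
  - (\sum_(e < K) elem_diss R K p X xn w epsv U e) - a * (U ord0 0 ^+ 2 + U ord_max 0 ^+ 2) / 2.
  move: h; set A := (U^T *m Pg R K p w *m V) 0 0. move=> h.
  apply/eqP; rewrite -subr_eq0; apply/eqP. 
  have h' := congr1 (fun z => z - (a * ((U ord_max 0 ^+ 2 - U ord0 0 ^+ 2) / 2))) h.
  move: h'. rewrite /=. move=> h'. rewrite addrK in h'. rewrite h'. by field.
by field.
Qed.
End Alg.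
Section Ana.
Variable R : realType.
Definition Cw (f : R -> R) := {within [set x : R | 0 <= x], continuous f}.

Lemma Cw_cst c : Cw (fun _ => c).
Proof. by move=> x; apply: cvg_cst. Qed.

Lemma Cw_add f g : Cw f -> Cw g -> Cw (fun s => f s + g s).
Proof. by move=> hf hg x; apply: continuousD; [exact: hf|exact: hg]. Qed.

Lemma Cw_mul f g : Cw f -> Cw g -> Cw (fun s => f s * g s).
Proof. by move=> hf hg x; apply: continuousM; [exact: hf|exact: hg]. Qed.

Lemma Cw_opp f : Cw f -> Cw (fun s => - f s).
Proof. by move=> hf x; apply: continuousN; exact: hf. Qed.

Lemma Cw_sqrt f : Cw f -> Cw (fun s => Num.sqrt (f s)).
Proof.
move=> hf x; apply: (continuous_comp (hf x)); exact: sqrt_continuous.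
Qed.

Lemma Cw_sum n (F : 'I_n -> R -> R) : (forall i, Cw (F i)) -> Cw (fun s => \sum_i F i s).
Proof.
elim: n F => [|n ih] F hF.
  by under eq_fun do rewrite big_ord0; exact: Cw_cst.
under eq_fun do rewrite big_ord_recr /=.
by apply: Cw_add; [apply: ih => i; exact: hF|exact: hF].
Qed.

Definition Cm m n (F : R -> 'M[R]_(m, n)) := forall i j, Cw (fun s => F s i j).

Lemma Cm_cst m n (M : 'M[R]_(m, n)) : Cm (fun _ => M).
Proof. by move=> i j; exact: Cw_cst. Qed.

Lemma Cm_mul m n k (F : R -> 'M[R]_(m, n)) (G : R -> 'M[R]_(n, k)) :
  Cm F -> Cm G -> Cm (fun s => F s *m G s).
Proof.
move=> hF hG i j; under eq_fun do rewrite mxE.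
by apply: Cw_sum => l; apply: Cw_mul.
Qed.

Lemma Cm_tr m n (F : R -> 'M[R]_(m, n)) : Cm F -> Cm (fun s => (F s)^T).
Proof. by move=> hF i j; under eq_fun do rewrite mxE; exact: hF. Qed.

Lemma Cm_diag n (F : R -> 'rV[R]_n) : Cm F -> Cm (fun s => diag_mx (F s)).
Proof.
move=> hF i j; under eq_fun do rewrite mxE.
case: (i == j); under eq_fun do rewrite ?mulr1n ?mulr0n.
  exact: hF.
exact: Cw_cst.
Qed.

Lemma Cm_row n (f : 'I_n -> R -> R) : (forall j, Cw (f j)) -> Cm (fun s => \row_j f j s).
Proof. by move=> hf i j; under eq_fun do rewrite mxE; exact: hf. Qed.

Lemma Cm_col n (f : 'I_n -> R -> R) : (forall j, Cw (f j)) -> Cm (fun s => \col_j f j s).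
Proof. by move=> hf i j; under eq_fun do rewrite mxE; exact: hf. Qed.


Definition Dm (x : R) m n (F : R -> 'M[R]_(m, n)) (F' : 'M[R]_(m, n)) :=
  forall i j, is_derive x 1 (fun s => F s i j) (F' i j).

Lemma Dm_cst x m n (M : 'M[R]_(m, n)) : Dm x (fun _ => M) 0.
Proof. move=> i j; rewrite mxE; exact: is_derive_cst. Qed.

Lemma Dm_mul x m n k (F : R -> 'M[R]_(m, n)) (G : R -> 'M[R]_(n, k)) F' G' :
  Dm x F F' -> Dm x G G' -> Dm x (fun s => F s *m G s) (F' *m G x + F x *m G').
Proof.
move=> hF hG i j.
have -> : (fun s => (F s *m G s) i j) = \sum_l (fun s => F s i l * G s l j).
  by rewrite fct_sumE; apply/funext => s; rewrite mxE.
apply: is_derive_eq.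
  apply: is_derive_sum => l.
  exact: (@is_deriveM _ _ (fun s => F s i l) (fun s => G s l j) x 1 _ _ (hF i l) (hG l j)).
rewrite !mxE -big_split /=; apply: eq_bigr => l _.
by rewrite /GRing.scale /=; ring.
Qed.

Lemma Dm_tr x m n (F : R -> 'M[R]_(m, n)) F' : Dm x F F' -> Dm x (fun s => (F s)^T) F'^T.
Proof.
move=> hF i j; rewrite mxE.
have -> : (fun s => (F s)^T i j) = (fun s => F s j i) by apply/funext => s; rewrite mxE.
exact: hF.
Qed.

Lemma Dm_col x n (u : 'I_n -> R -> R) : (forall i, derivable (u i) x 1) ->
  Dm x (colv R n u) (dcolv R n u x).
Proof.
move=> hu i j; rewrite mxE.
have -> : (fun s => colv R n u s i j) = u i by apply/funext => s; rewrite mxE.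
rewrite derive1E; exact: derivableP.
Qed.

End Ana.

Arguments Cm_cst {R m n} M.
Arguments Dm_cst {R} x {m n} M.
Section Main.
Variable R : realType.

Lemma Pg_sym K p (w : nat -> 'I_p.+1 -> R) : (Pg R K p w)^T = Pg R K p w.
Proof.
apply/matrixP => i j; rewrite mxE !summxE; apply: eq_bigr => e _.
set M := (Restr R K p e)^T *m Pe R p w e *m Restr R K p e.
have h : M^T = M by rewrite /M /Pe !trmx_mul trmxK tr_diag_mx mulmxA.
by rewrite -[in RHS]h [RHS]mxE.
Qed.

Lemma sym_form n (P : 'M[R]_n) (U V : 'cV[R]_n) : P^T = P ->
  (V^T *m P *m U) 0 0 = (U^T *m P *m V) 0 0.
Proof.
move=> hP; transitivity ((V^T *m P *m U)^T 0 0); first by rewrite [RHS]mxE.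
by rewrite !trmx_mul trmxK hP mulmxA.
Qed.

Lemma fin_ineq (a A B C Dv : R) : 2 * A + a * B = C - Dv -> 0 <= a * B -> Dv + 2 * A <= C.
Proof. by move=> h1 h2; lra. Qed.
End Main.

Theorem proposition4 (R : realType) (K p : nat) (X : nat -> R)
  (xn w : nat -> 'I_p.+1 -> R) (a : R)
  (eps u : 'I_((K * p).+1) -> R -> R)
  (sigma0 sigmaN g0 gN : R) :
  (0 < K)%N -> (0 < p)%N ->
  X 0%N = 0 -> X K = 1 -> (forall e : nat, (e < K)%N -> X e < X e.+1) ->
  (forall e : nat, (e < K)%N -> gauss_lobatto R p (X e) (X e.+1) (xn e) (w e)) ->
  0 <= a ->
  (forall j t, 0 <= t -> 0 <= eps j t) ->
  (forall j, {within [set x : R | 0 <= x], continuous (eps j)}) ->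
  (forall i, {within [set x : R | 0 <= x], continuous (u i)}) ->
  (forall i t, 0 < t -> derivable (u i) t 1) ->
  (forall i t, 0 < t -> {for t, continuous (u i)^`()}) ->
  (forall t, 0 < t ->
    let U := colv R (K * p).+1 u t in
    let epsv := colv R (K * p).+1 eps t in
    let eps0 := eps ord0 t in
    let epsN := eps ord_max t in
    let delta0 := (De R p X xn w 0 *m Restr R K p 0 *m U) ord0 0 in
    let deltaN := (De R p X xn w K.-1 *m Restr R K p K.-1 *m U) ord_max 0 in
    Pg R K p w *m dcolv R (K * p).+1 u t + a *: (Qg R K p X xn *m U) =
      - (Ag R K p X xn w epsv *m U) - (eps0 * delta0) *: E0 R (K * p)
      + (epsN * deltaN) *: EN R (K * p)
      + (sigma0 * (a * u ord0 t - eps0 * delta0 - g0)) *: E0 R (K * p)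
      + (sigmaN * (- (epsN * deltaN) - gN)) *: EN R (K * p)) ->
  sigma0 = -1 -> sigmaN = 1 -> g0 = 0 -> gN = 0 ->
  forall t, 0 <= t ->
    ((colv R (K * p).+1 u t)^T *m Pg R K p w *m colv R (K * p).+1 u t) 0 0
    + 2 * Rintegral (@lebesgue_measure R) `[0, t]
            (fun s => \sum_(e < K) elem_diss R K p X xn w (colv R (K * p).+1 eps s) (colv R (K * p).+1 u s) e)
    <= ((colv R (K * p).+1 u 0)^T *m Pg R K p w *m colv R (K * p).+1 u 0) 0 0.
Proof.
move=> K0 p0 X0 XK hX hgl a0 eps0 ceps cu du cdu Heq s0 sN g0e gNe t t0.
subst sigma0 sigmaN g0 gN.
pose E s := ((colv R (K * p).+1 u s)^T *m Pg R K p w *m colv R (K * p).+1 u s) 0 0.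
pose D s := \sum_(e < K) elem_diss R K p X xn w (colv R (K * p).+1 eps s) (colv R (K * p).+1 u s) e.
pose H s := u ord0 s ^+ 2 + u ord_max s ^+ 2.
pose f s := 2 * D s + a * H s.
have cE : Cw E.
  have c1 := Cm_col (f:=u) cu. have c2 := Cm_mul (Cm_mul (Cm_tr c1) (Cm_cst (Pg R K p w))) c1. exact: (c2 0 0).
have cD : Cw D.
  apply: Cw_sum => e.
  have cS : Cm (fun s => sqrtE R K p e (colv R (K * p).+1 eps s)).
    rewrite /sqrtE; apply: Cm_diag; apply: Cm_row => j; apply: Cw_sqrt.
    have c3 := Cm_mul (Cm_cst (Restr R K p e)) (Cm_col (f:=eps) ceps). move: (c3 j 0). exact.
  have cv : Cm (fun s => sqrtE R K p e (colv R (K * p).+1 eps s) *m De R p X xn w e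
                         *m Restr R K p e *m colv R (K * p).+1 u s).
    exact: (Cm_mul (Cm_mul (Cm_mul cS (Cm_cst _)) (Cm_cst _)) (Cm_col (f:=u) cu)).
  have c4 := Cm_mul (Cm_mul (Cm_tr cv) (Cm_cst (Pe R p w e))) cv.
  move: (c4 0 0); rewrite /Cw /elem_diss /=. exact.
have cH : Cw H by apply: Cw_add; apply: Cw_mul; exact: cu.
have cf : Cw f by apply: Cw_add; apply: Cw_mul => //; exact: Cw_cst.
have dE : forall s : R, 0 < s -> is_derive s 1 (fun s => - E s) (f s).
  move=> s s0.
  have hD := Dm_mul (Dm_mul (Dm_tr (Dm_col (fun i => du i s s0))) (Dm_cst s (Pg R K p w)))
                    (Dm_col (fun i => du i s s0)).
  apply: is_derive_eq; first exact: (is_deriveN (hD 0 0)).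
  rewrite mulmx0 addr0 entryD sym_form ?Pg_sym //.
  rewrite -mulr2n -mulr_natl.
  rewrite (energy_alg hX hgl _ (Heq s s0)); last by rewrite mxE.
  rewrite /f /D /H !mxE; ring.
have [t00|tpos] := eqVneq t 0.
  subst t; rewrite set_itv1 /Rintegral integral_set1 /= mulr0 addr0 //.
have tp : 0 < t by rewrite lt_def tpos t0.
have sub : `[0, t] `<=` [set x : R | 0 <= x].
  by move=> x /=; rewrite in_itv /= => /andP[].
have cf' : {within `[0, t], continuous f} := continuous_subspaceW sub cf.
have cE' : {within `[0, t], continuous (fun s => - E s)}.
  exact: continuous_subspaceW sub (Cw_opp cE).
have ftc := continuous_FTC2 tp cf'.
have := (continuous_within_itvP _ tp).1 cE' => -[_ cl cr].
have ftc' : (\int[@lebesgue_measure R]_(x in `[0%R, t]) (f x)%:E = (- E t)%:E - (- E 0)%:E)%E.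
  apply: (continuous_FTC2 (F := fun s => - E s) tp cf').
    split => //; move=> x; rewrite in_itv /= => /andP[x0 _].
    by have := dE x x0 => -[].
  move=> x; rewrite in_itv /= => /andP[x0 _].
  by rewrite derive1E; have := dE x x0 => h; rewrite derive_val.
have intf : Rintegral (@lebesgue_measure R) `[0, t] f = E 0 - E t.
  by rewrite /Rintegral ftc' /= opprK addrC.
have iD : (@lebesgue_measure R).-integrable `[0, t] (EFin \o D).
  apply: continuous_compact_integrable; first exact: segment_compact.
  exact: continuous_subspaceW sub cD.
have iH : (@lebesgue_measure R).-integrable `[0, t] (EFin \o H).
  apply: continuous_compact_integrable; first exact: segment_compact.
  exact: continuous_subspaceW sub cH.
have i2D : (@lebesgue_measure R).-integrable `[0, t] (EFin \o (fun s => 2 * D s)).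
  apply: continuous_compact_integrable; first exact: segment_compact.
  apply: continuous_subspaceW sub _; apply: Cw_mul => //; exact: Cw_cst.
have iaH : (@lebesgue_measure R).-integrable `[0, t] (EFin \o (fun s => a * H s)).
  apply: continuous_compact_integrable; first exact: segment_compact.
  apply: continuous_subspaceW sub _; apply: Cw_mul => //; exact: Cw_cst.
rewrite /f RintegralD // ?RintegralZl // in intf.
have Hge : 0 <= Rintegral (@lebesgue_measure R) `[0, t] H.
  by apply: Rintegral_ge0 => x _; rewrite /H addr_ge0 // sqr_ge0.
rewrite -/(E t) -/(E 0) -/D.
have : 0 <= a * Rintegral (@lebesgue_measure R) `[0, t] H by apply: mulr_ge0.
intros h; exact: (fin_ineq intf h).
Qed.
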